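(* For every $n \ge 1$, every extremal point $\rho$ of $\Gamma(n)$ satisfies $\mathrm{rank}(\rho) \le \sqrt{2n^2 - 1}$. Equivalently, $MR(n) \le \sqrt{2n^2-1}$.
   Context: A state $\rho$ on $M_n(\mathbb{C}) \otimes M_n(\mathbb{C})$ is a marginal tracial state if $\rho(A\otimes I) = \mathrm{tr}(A)$ and $\rho(I \otimes B) = \mathrm{tr}(B)$ for all $A,B \in M_n(\mathbb{C})$, where $\mathrm{tr}$ is the normalized trace. $\Gamma(n)$ is the convex set of all marginal tracial states on $M_n(\mathbb{C}) \otimes M_n(\mathbb{C})$. For a state $\rho$, $\mathrm{rank}(\rho)$ is the rank of its density matrix. $MR(n)$ denotes the maximum of $\mathrm{rank}(\rho)$ over all extremal points $\rho$ of $\Gamma(n)$. *)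

(* Defs.v *)
(* Complex numbers: an arbitrary numClosedFieldType C
   (algebraically closed field with conjugation and the usual order/norm),
   e.g. algC; the result is stated for all such C. *)
From HB Require Import structures.
From mathcomp Require Import all_boot all_order all_algebra.
Set Implicit Arguments. Unset Strict Implicit. Unset Printing Implicit Defensive.
Import Order.TTheory GRing.Theory Num.Theory.
Local Open Scope ring_scope.

(* Decomposition of an index of C^n (x) C^n = C^(n*n) into a pair of indices,
   inverse to mxvec_index. *)
Definition tidx (n : nat) (k : 'I_(n * n)) : 'I_n * 'I_n :=
  enum_val (cast_ord (esym (mxvec_cast n n)) k).

Definition kron (C : nzRingType) (n : nat) (A B : 'M[C]_n) : 'M[C]_(n * n) :=
  \matrix_(k, l) (A (tidx k).1 (tidx l).1 * B (tidx k).2 (tidx l).2).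

Definition psd (C : numClosedFieldType) (m : nat) (D : 'M[C]_m) : Prop :=
  forall v : 'cV[C]_m, 0 <= ((map_mx Num.conj v)^T *m D *m v) 0 0.

(* The state rho on M_n (x) M_n with density matrix D: rho(X) = Tr(D X). *)
Definition stateval (C : numClosedFieldType) (n : nat) (D X : 'M[C]_(n * n)) : C :=
  \tr (D *m X).

Definition is_state (C : numClosedFieldType) (n : nat) (D : 'M[C]_(n * n)) : Prop :=
  psd D /\ \tr D = 1.

Definition ntr (C : numClosedFieldType) (n : nat) (A : 'M[C]_n) : C :=
  \tr A / n%:R.

Definition Gamma (C : numClosedFieldType) (n : nat) (D : 'M[C]_(n * n)) : Prop :=
  is_state D /\
  (forall A : 'M[C]_n, stateval D (kron A 1%:M) = ntr A) /\
  (forall B : 'M[C]_n, stateval D (kron 1%:M B) = ntr B).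

Definition extremal_Gamma (C : numClosedFieldType) (n : nat) (D : 'M[C]_(n * n)) : Prop :=
  Gamma D /\
  forall (D1 D2 : 'M[C]_(n * n)) (t : C),
    Gamma D1 -> Gamma D2 -> 0 < t -> t < 1 ->
    D = t *: D1 + (1 - t) *: D2 -> D1 = D /\ D2 = D.

(* Main.v *)
Require Import Defs.
From HB Require Import structures.
From mathcomp Require Import all_boot all_order all_algebra.
Import Order.TTheory GRing.Theory Num.Theory.
Set Implicit Arguments. Unset Strict Implicit. Unset Printing Implicit Defensive.
Local Open Scope ring_scope.

Definition adj {C : numClosedFieldType} m k (A : 'M[C]_(m, k)) : 'M[C]_(k, m) :=
  (map_mx Num.conj A)^T.

Lemma adjE {C : numClosedFieldType} m k (A : 'M[C]_(m, k)) i j :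
  adj A i j = (A j i)^*.
Proof. by rewrite /adj !mxE. Qed.

Lemma adjD {C : numClosedFieldType} m k (A B : 'M[C]_(m, k)) :
  adj (A + B) = adj A + adj B.
Proof. by apply/matrixP=> i j; rewrite !mxE rmorphD. Qed.

Lemma adjZ {C : numClosedFieldType} m k (a : C) (A : 'M[C]_(m, k)) :
  adj (a *: A) = a^* *: adj A.
Proof. by apply/matrixP=> i j; rewrite !mxE rmorphM. Qed.

Lemma adjN {C : numClosedFieldType} m k (A : 'M[C]_(m, k)) :
  adj (- A) = - adj A.
Proof. by apply/matrixP=> i j; rewrite !mxE rmorphN. Qed.

Lemma adj0 {C : numClosedFieldType} m k : adj (0 : 'M[C]_(m, k)) = 0.
Proof. by apply/matrixP=> i j; rewrite !mxE rmorph0. Qed.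

Lemma adjK {C : numClosedFieldType} m k (A : 'M[C]_(m, k)) : adj (adj A) = A.
Proof. by apply/matrixP=> i j; rewrite !mxE conjCK. Qed.

Lemma adjM {C : numClosedFieldType} m k p (A : 'M[C]_(m, k)) (B : 'M[C]_(k, p)) :
  adj (A *m B) = adj B *m adj A.
Proof. by rewrite /adj map_mxM trmx_mul. Qed.

Lemma adjt1 {C : numClosedFieldType} m : adj (1%:M : 'M[C]_m) = 1%:M.
Proof. by apply/matrixP=> i j; rewrite !mxE eq_sym rmorph_nat. Qed.

Lemma tr_adj {C : numClosedFieldType} m (A : 'M[C]_m) : \tr (adj A) = (\tr A)^*.
Proof. rewrite /mxtrace rmorph_sum; apply: eq_bigr => i _; by rewrite adjE. Qed.

Definition qf {C : numClosedFieldType} m (A : 'M[C]_m) (u v : 'cV[C]_m) : C :=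
  (adj u *m A *m v) 0 0.

Lemma qf_exp {C : numClosedFieldType} m (A : 'M[C]_m) (u v : 'cV[C]_m) (a b : C) :
  qf A (a *: u + b *: v) (a *: u + b *: v) =
  a^* * a * qf A u u + a^* * b * qf A u v + b^* * a * qf A v u + b^* * b * qf A v v.
Proof.
rewrite /qf adjD !adjZ !mulmxDl !mulmxDr.
rewrite -!scalemxAl -!scalemxAr !scalerA !mxE.
by rewrite !addrA.
Qed.

Lemma qf_conj {C : numClosedFieldType} m (A : 'M[C]_m) (u v : 'cV[C]_m) :
  (qf A u v)^* = qf (adj A) v u.
Proof.
by rewrite /qf -adjE !adjM adjK mulmxA.
Qed.


Lemma psd_qf {C : numClosedFieldType} m (D : 'M[C]_m) v : psd D -> 0 <= qf D v v.
Proof. by move=> /(_ v). Qed.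

Lemma psd_herm {C : numClosedFieldType} m (D : 'M[C]_m) u v :
  psd D -> qf D v u = (qf D u v)^*.
Proof.
move=> hD.
set p := qf D u v; set q := qf D v u.
have ra : qf D u u \is Num.real by apply: ger0_real; apply: psd_qf.
have rb : qf D v v \is Num.real by apply: ger0_real; apply: psd_qf.
have r1 : p + q \is Num.real.
  have := ger0_real (psd_qf (1 *: u + 1 *: v) hD).
  rewrite qf_exp rmorph1 !mul1r -/p -/q (rpredDr _ rb) -addrA.
  by rewrite (rpredDl _ ra).
have r2 : 'i * p - 'i * q \is Num.real.
  have := ger0_real (psd_qf (1 *: u + 'i *: v) hD).
  rewrite qf_exp rmorph1 !mul1r mulr1 conjCi !mulNr -expr2 sqrCi mulN1r opprK -/p -/q.
  by rewrite (rpredDr _ rb) -addrA (rpredDl _ ra).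
move/CrealP: r1; move/CrealP: r2.
rewrite rmorphB !rmorphM rmorphD /= => e2 e1.
have iC : ('i : C)^* = - 'i by rewrite conjCi.
rewrite iC !mulNr -opprD -mulrBr -mulrN opprB -mulrBr in e2.
have i0 : ('i : C) != 0 by rewrite -normr_eq0 normCi oner_eq0.
have e2' := mulfI i0 e2.
(* e1 : p^* + q^* = p + q ; e2' : q^* - p^* = p - q *)
have h1 : q - p^* = q^* - p.
  apply/eqP; rewrite subr_eq addrAC eq_sym subr_eq addrC e1 addrC. done.
have h2 : q - p^* = p - q^*.
  apply/eqP; rewrite subr_eq addrAC eq_sym subr_eq -(subrK p^* q^*) e2' addrA subrKC. done.
have h3 : (q^* - p) *+ 2 = 0.
  by rewrite mulr2n -{1}h1 h2 -opprB addNr.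
move/eqP: h3; rewrite -mulr_natr mulf_eq0 pnatr_eq0 orbF subr_eq0 => /eqP <-.
by rewrite conjCK.
Qed.


Lemma ab_le {R : numDomainType} (a b : R) : 0 <= a -> 0 <= b -> a * b <= a ^+ 2 + b ^+ 2.
Proof.
move=> a0 b0; case/orP: (ger_leVge a0 b0) => h.
  apply: (le_trans (y := b ^+ 2)); first by rewrite expr2 ler_wpM2r.
  by rewrite lerDr exprn_ge0.
apply: (le_trans (y := a ^+ 2)); first by rewrite expr2 ler_wpM2l.
by rewrite lerDl exprn_ge0.
Qed.

Definition nsq {C : numClosedFieldType} m (x : 'cV[C]_m) : C := (adj x *m x) 0 0.

Lemma nsqE {C : numClosedFieldType} m (x : 'cV[C]_m) : nsq x = \sum_k `|x k 0| ^+ 2.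
Proof. rewrite /nsq mxE; apply: eq_bigr => k _; by rewrite adjE normCKC. Qed.

Lemma nsq_ge0 {C : numClosedFieldType} m (x : 'cV[C]_m) : 0 <= nsq x.
Proof. by rewrite nsqE sumr_ge0 // => k _; rewrite exprn_ge0. Qed.

Lemma entry_le {C : numClosedFieldType} m (x : 'cV[C]_m) i : `|x i 0| ^+ 2 <= nsq x.
Proof.
rewrite nsqE (bigD1 i) //= lerDl; by rewrite sumr_ge0 // => k _; rewrite exprn_ge0.
Qed.

Definition msum {C : numClosedFieldType} m k (P : 'M[C]_(m, k)) : C :=
  \sum_i \sum_j `|P i j|.

Lemma msum_ge0 {C : numClosedFieldType} m k (P : 'M[C]_(m, k)) : 0 <= msum P.
Proof. by rewrite sumr_ge0 // => i _; rewrite sumr_ge0. Qed.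

Lemma qf_bound {C : numClosedFieldType} m (P : 'M[C]_m) (x : 'cV[C]_m) :
  `|qf P x x| <= (msum P *+ 2) * nsq x.
Proof.
rewrite /qf mxE.
apply: (le_trans (ler_norm_sum _ _ _)).
have h : forall i j, `|x i 0| * `|x j 0| <= nsq x *+ 2.
  move=> i j; apply: (le_trans (ab_le _ _)) => //.
  by rewrite mulr2n lerD // entry_le.
rewrite /msum -mulr_natr -mulrA mulr_suml.
rewrite [X in _ <= X](eq_bigr (fun i => \sum_j `|P i j| * (2 * nsq x))); last by move=> i _; rewrite mulr_suml.
rewrite exchange_big /=.
apply: ler_sum => j _; rewrite normrM mxE.
apply: (le_trans (ler_wpM2r (normr_ge0 _) (ler_norm_sum _ _ _))).
rewrite mulr_suml; apply: ler_sum => i _.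
rewrite adjE normrM norm_conjC mulrAC mulrC.
by apply: ler_wpM2l => //; rewrite mulr_natl.
Qed.


Lemma qfD {C : numClosedFieldType} m (A B : 'M[C]_m) u v : qf (A + B) u v = qf A u v + qf B u v.
Proof. by rewrite /qf mulmxDr mulmxDl mxE. Qed.

Lemma qfZ {C : numClosedFieldType} m (c : C) (A : 'M[C]_m) u v : qf (c *: A) u v = c * qf A u v.
Proof. by rewrite /qf -scalemxAr -scalemxAl mxE. Qed.

Lemma nsq_mul {C : numClosedFieldType} m k (M : 'M[C]_(k, m)) (x : 'cV[C]_m) :
  nsq (M *m x) = qf (adj M *m M) x x.
Proof. by rewrite /nsq /qf adjM !mulmxA. Qed.

Lemma qf_conj_mul {C : numClosedFieldType} m k (M : 'M[C]_(k, m)) (Y : 'M[C]_k) (x : 'cV[C]_m) :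
  qf (adj M *m Y *m M) x x = qf Y (M *m x) (M *m x).
Proof. by rewrite /qf adjM !mulmxA. Qed.

Lemma psd_Dv {C : numClosedFieldType} m (D : 'M[C]_m) v : psd D ->
  nsq (D *m v) <= (msum D *+ 2 + 1) * qf D v v.
Proof.
move=> hD.
set w := D *m v; set s := nsq w; set a := qf D v v; set b := qf D w w.
set c := msum D *+ 2 + 1.
have c0 : 0 < c by rewrite ltr_wpDl ?mulrn_wge0 ?msum_ge0.
have cr : c^* = c by apply: conj_Creal; apply: gtr0_real.
have s0 : 0 <= s by apply: nsq_ge0.
have sr : s^* = s by apply: conj_Creal; apply: ger0_real.
have hwv : qf D w v = s by rewrite /qf /s /nsq -mulmxA.
have hvw : qf D v w = s by rewrite (psd_herm _ _ hD) hwv sr.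
have hb : b <= (c - 1) * s.
  have b0 : 0 <= b by apply: psd_qf.
  rewrite addrK; apply: (le_trans (real_ler_norm (ger0_real b0))).
  exact: qf_bound.
have := psd_qf (c *: v + (-1) *: w) hD.
rewrite qf_exp cr hwv hvw -/a -/b rmorphN rmorph1 !mulN1r mulrN1 opprK mul1r.
move=> h.
have h2 : 0 <= c * c * a - c * s.
  apply: (le_trans h).
  rewrite -[X in _ <= X]addr0 -!addrA lerD2l.
  rewrite !mulNr lerD2l addrC subr_le0.
  apply: (le_trans hb).
  by rewrite mulrBl mul1r lerBlDr lerDl.
rewrite subr_ge0 -mulrA in h2.
by rewrite -(ler_pM2l c0).
Qed.

Lemma perturb {C : numClosedFieldType} m r (D : 'M[C]_m) (B Z : 'M[C]_(r, m)) (Y : 'M[C]_r) :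
  psd D -> B = Z *m D -> adj Y = Y ->
  exists e : C, 0 < e /\ psd (D + e *: (adj B *m Y *m B)) /\ psd (D - e *: (adj B *m Y *m B)).
Proof.
move=> hD hB hY; set H := adj B *m Y *m B.
set K := msum Y *+ 2 * (msum (adj Z *m Z) *+ 2 * (msum D *+ 2 + 1)).
have K0 : 0 <= K by rewrite !mulr_ge0 ?mulrn_wge0 ?msum_ge0 // addr_ge0 ?mulrn_wge0 ?msum_ge0.
have hb : forall v, `|qf H v v| <= K * qf D v v.
  move=> v; rewrite qf_conj_mul.
  apply: (le_trans (qf_bound _ _)).
  rewrite -mulrA; apply: ler_wpM2l; first by rewrite mulrn_wge0 ?msum_ge0.
  rewrite hB -mulmxA nsq_mul.
  have w0 := nsq_ge0 (Z *m (D *m v)); rewrite nsq_mul in w0.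
  apply: (le_trans (real_ler_norm (ger0_real w0))).
  apply: (le_trans (qf_bound _ _)).
  rewrite -mulrA; apply: ler_wpM2l; first by rewrite mulrn_wge0 ?msum_ge0.
  exact: psd_Dv.
have hr : forall v, qf H v v \is Num.real.
  move=> v; apply/CrealP; rewrite qf_conj /H !adjM adjK hY mulmxA //.
set e := (K + 1)^-1.
have K1 : 0 < K + 1 by rewrite ltr_wpDl.
have e0 : 0 < e by rewrite invr_gt0.
have eK : e * K <= 1.
  rewrite -(mulVf (lt0r_neq0 K1)) -/e; apply: ler_wpM2l; [exact: ltW | by rewrite lerDl].
have gen : forall c, c \is Num.real -> `|c| <= e -> psd (D + c *: H).
  move=> c cr ce v; rewrite -/(qf _ v v) qfD qfZ.
  have a0 := psd_qf v hD.
  have h1 : `|c * qf H v v| <= qf D v v.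
    rewrite normrM; apply: (le_trans (ler_wpM2r (normr_ge0 _) ce)).
    apply: (le_trans (ler_wpM2l (ltW e0) (hb v))).
    rewrite mulrA -[X in _ <= X]mul1r; apply: ler_wpM2r => //.
  have chr : c * qf H v v \is Num.real by rewrite rpredM.
  move: h1; rewrite (real_ler_norml _ chr) => /andP [h1 _].
  by rewrite -[qf D v v]opprK addrC subr_ge0.
exists e; split=> //; split; first by apply: gen; [apply: gtr0_real | rewrite gtr0_norm].
rewrite -scaleNr; apply: gen; first by rewrite rpredN gtr0_real.
by rewrite normrN gtr0_norm.
Qed.


Lemma split_l m n (k : 'I_m) : split (lshift n k) = inl k.
Proof. exact: (unsplitK (inl _ k)). Qed.
Lemma split_r m n (k : 'I_n) : split (rshift m k) = inr k.
Proof. exact: (unsplitK (inr _ k)). Qed.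

Definition tidxI (n : nat) (p : 'I_n * 'I_n) : 'I_(n * n) :=
  cast_ord (mxvec_cast n n) (enum_rank p).

Lemma tidxK n : cancel (@tidx n) (@tidxI n).
Proof. by move=> k; rewrite /tidx /tidxI enum_valK cast_ordKV. Qed.
Lemma tidxIK n : cancel (@tidxI n) (@tidx n).
Proof. by move=> p; rewrite /tidx /tidxI cast_ordK enum_rankK. Qed.

Lemma tidx_inj n : injective (@tidx n).
Proof. exact: can_inj (@tidxK n). Qed.

Definition Eb {C : numClosedFieldType} n (k : 'I_(n * n)) : 'M[C]_n :=
  delta_mx (tidx k).1 (tidx k).2.

Lemma basis_exp {C : numClosedFieldType} n (A : 'M[C]_n) :
  A = \sum_k A (tidx k).1 (tidx k).2 *: Eb k.
Proof.
rewrite {1}(matrix_sum_delta A) pair_bigA /=.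
rewrite (reindex (@tidx n)) //=.
by exists (@tidxI n) => x _; [rewrite tidxK | rewrite tidxIK].
Qed.

Lemma lin_sumC {C : numClosedFieldType} p q (f : 'M[C]_(p, q) -> C) :
  (forall a x y, f (a *: x + y) = a * f x + f y) ->
  forall (I : Type) (r : seq I) (c : I -> C) X,
  f (\sum_(i <- r) c i *: X i) = \sum_(i <- r) c i * f (X i).
Proof.
move=> hf I r c X.
have f0 : f 0 = 0.
  have := hf 1 0 0; rewrite scaler0 addr0 mul1r => h.
  by apply: (addrI (f 0)); rewrite addr0 -h.
elim: r => [|x r IH]; first by rewrite !big_nil.
by rewrite !big_cons hf IH.
Qed.

Lemma kronDl {C : numClosedFieldType} n (a : C) (A A' B : 'M[C]_n) :
  kron (a *: A + A') B = a *: kron A B + kron A' B.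
Proof. by apply/matrixP=> i j; rewrite !mxE mulrDl mulrA. Qed.

Lemma kronDr {C : numClosedFieldType} n (a : C) (A B B' : 'M[C]_n) :
  kron A (a *: B + B') = a *: kron A B + kron A B'.
Proof. by apply/matrixP=> i j; rewrite !mxE mulrDr mulrCA. Qed.

Lemma statevalD {C : numClosedFieldType} n (a : C) (H X Y : 'M[C]_(n * n)) :
  stateval H (a *: X + Y) = a * stateval H X + stateval H Y.
Proof. by rewrite /stateval mulmxDr -scalemxAr mxtraceD mxtraceZ. Qed.

Lemma statevalDl {C : numClosedFieldType} n (a : C) (H H' X : 'M[C]_(n * n)) :
  stateval (a *: H + H') X = a * stateval H X + stateval H' X.
Proof. by rewrite /stateval mulmxDl -scalemxAl mxtraceD mxtraceZ. Qed.

Lemma kron11 {C : numClosedFieldType} n : kron (1%:M : 'M[C]_n) 1%:M = 1%:M.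
Proof.
apply/matrixP=> k l; rewrite !mxE -natrM mulnb.
congr (_%:R); congr nat_of_bool.
apply/idP/idP.
  by case/andP=> /eqP h1 /eqP h2; apply/eqP; apply: tidx_inj; rewrite [tidx k]surjective_pairing [tidx l]surjective_pairing h1 h2.
by move/eqP->; rewrite !eqxx.
Qed.

Lemma adj_kron {C : numClosedFieldType} n (A B : 'M[C]_n) : adj (kron A B) = kron (adj A) (adj B).
Proof. by apply/matrixP=> k l; rewrite !mxE rmorphM. Qed.

Lemma stateval_adj {C : numClosedFieldType} n (H K : 'M[C]_(n * n)) :
  stateval (adj H) K = (stateval H (adj K))^*.
Proof.
by rewrite /stateval -tr_adj adjM adjK mxtrace_mulC.
Qed.

Definition Pc {C : numClosedFieldType} n (H : 'M[C]_(n * n)) : Prop :=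
  (forall A, stateval H (kron A 1%:M) = 0) /\ (forall B, stateval H (kron 1%:M B) = 0).

Lemma Pc_adj {C : numClosedFieldType} n (H : 'M[C]_(n * n)) : Pc H -> Pc (adj H).
Proof.
case=> h1 h2; split=> A; rewrite stateval_adj adj_kron adjt1.
  by rewrite h1 rmorph0.
by rewrite h2 rmorph0.
Qed.

Lemma Pc_lin {C : numClosedFieldType} n (a : C) (H H' : 'M[C]_(n * n)) :
  Pc H -> Pc H' -> Pc (a *: H + H').
Proof.
case=> h1 h2 [h1' h2']; split=> A; rewrite statevalDl.
  by rewrite h1 h1' mulr0 addr0.
by rewrite h2 h2' mulr0 addr0.
Qed.

Lemma Pc_basis {C : numClosedFieldType} n (H : 'M[C]_(n * n)) :
  (forall k, stateval H (kron (Eb k) 1%:M) = 0) ->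
  (forall k, stateval H (kron 1%:M (Eb k)) = 0) -> Pc H.
Proof.
move=> h1 h2; split=> A; rewrite (basis_exp A).
  rewrite (lin_sumC (f := fun X => stateval H (kron X 1%:M))).
    by rewrite big1 // => k _; rewrite h1 mulr0.
  by move=> a x y; rewrite kronDl statevalD.
rewrite (lin_sumC (f := fun X => stateval H (kron 1%:M X))).
  by rewrite big1 // => k _; rewrite h2 mulr0.
by move=> a x y; rewrite kronDr statevalD.
Qed.


Lemma Gamma_pert {C : numClosedFieldType} n (D H : 'M[C]_(n * n)) (c : C) :
  Gamma D -> psd (D + c *: H) -> Pc H -> Gamma (D + c *: H).
Proof.
move=> [[_ trD] [g1 g2]] hp [p1 p2].
have trH : \tr H = 0 by rewrite -(p1 1%:M) /stateval kron11 mulmx1.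
have e : forall X, stateval (D + c *: H) X = stateval D X + c * stateval H X.
  by move=> X; rewrite addrC statevalDl addrC.
split; first by split=> //; rewrite mxtraceD mxtraceZ trH mulr0 addr0.
by split=> A; rewrite e ?p1 ?p2 mulr0 addr0.
Qed.

Lemma finish {C : numClosedFieldType} n r (D : 'M[C]_(n * n)) (B Z : 'M[C]_(r, n * n))
  (C0 : 'M[C]_(n * n, r)) (Y : 'M[C]_r) :
  extremal_Gamma D -> B = Z *m D -> B *m C0 = 1%:M -> adj Y = Y -> Y != 0 ->
  Pc (adj B *m Y *m B) -> False.
Proof.
move=> [hG hext] hZ hC0 hY hY0 hP.
set H := adj B *m Y *m B.
have hH0 : H != 0.
  apply: contra hY0 => /eqP h0.
  have : adj C0 *m H *m C0 = Y.
    by rewrite /H !mulmxA -adjM hC0 adjt1 mul1mx -mulmxA hC0 mulmx1.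
  by rewrite h0 mulmx0 mul0mx => <-.
have [e [e0 [p1 p2]]] := perturb hG.1.1 hZ hY.
rewrite -/H in p1 p2; rewrite -scaleNr in p2.
have G1 := Gamma_pert hG p1 hP.
have G2 := Gamma_pert hG p2 hP.
have t0 : (0 : C) < 2^-1 by rewrite invr_gt0 ltr0n.
have t1 : (2^-1 : C) < 1 by rewrite invf_lt1 ?ltr0n // ltr1n.
have hD : D = 2^-1 *: (D + e *: H) + (1 - 2^-1) *: (D + - e *: H).
  have -> : (1 : C) - 2^-1 = 2^-1 by rewrite {1}(splitr 1) mul1r addrK.
  rewrite -scalerDr addrACA scaleNr subrr addr0 -mulr2n -scaler_nat scalerA.
  by rewrite mulVf ?pnatr_eq0 // scale1r.
have [h1 _] := hext _ _ _ G1 G2 t0 t1 hD.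
move: h1 => /eqP; rewrite -subr_eq0 addrC addKr scaler_eq0 (negbTE hH0) orbF.
by rewrite (negbTE (lt0r_neq0 e0)).
Qed.


Definition Kc {C : numClosedFieldType} n (q : 'I_(n * n + n * n)) : 'M[C]_(n * n) :=
  match split q with
  | inl k => kron (Eb k) 1%:M
  | inr k => kron 1%:M (Eb k)
  end.

Definition wv {C : numClosedFieldType} n : 'cV[C]_(n * n + n * n) :=
  \col_q match split q with
  | inl k => (1%:M : 'M[C]_n) (tidx k).1 (tidx k).2
  | inr k => - (1%:M : 'M[C]_n) (tidx k).1 (tidx k).2
  end.

Lemma congB {C : numClosedFieldType} m r (B : 'M[C]_(r, m)) (a : C) (X Y : 'M[C]_r) :
  adj B *m (a *: X + Y) *m B = a *: (adj B *m X *m B) + adj B *m Y *m B.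
Proof. by rewrite mulmxDr mulmxDl -scalemxAr -scalemxAl. Qed.

Lemma vec_mxD {C : numClosedFieldType} r (a : C) (x y : 'rV[C]_(r * r)) :
  vec_mx (a *: x + y) = a *: vec_mx x + vec_mx y.
Proof. by apply/matrixP=> i j; rewrite !mxE. Qed.

Lemma wv_neq0 {C : numClosedFieldType} n : (0 < n)%N -> @wv C n != 0.
Proof.
move=> hn; apply/negP => /eqP h0.
have : (1%:M : 'M[C]_n) = 0.
  rewrite (basis_exp 1%:M) big1 // => k _.
  have hk : (1%:M : 'M[C]_n) (tidx k).1 (tidx k).2 = 0.
    move: (congr1 (fun M : 'cV[C]_(n * n + n * n) => M (lshift (n * n) k) 0) h0); rewrite !mxE split_l => h; by rewrite -h mxE.
  by rewrite hk scale0r.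
move/matrixP/(_ (Ordinal hn) (Ordinal hn)); rewrite !mxE eqxx /=.
by move/eqP; rewrite oner_eq0.
Qed.

Lemma sum_basis_l {C : numClosedFieldType} n (H : 'M[C]_(n * n)) :
  \sum_k (1%:M : 'M[C]_n) (tidx k).1 (tidx k).2 * stateval H (kron (Eb k) 1%:M) =
  stateval H 1%:M.
Proof.
rewrite -(lin_sumC (f := fun X => stateval H (kron X 1%:M))).
  by rewrite -basis_exp kron11.
by move=> a x y; rewrite kronDl statevalD.
Qed.

Lemma sum_basis_r {C : numClosedFieldType} n (H : 'M[C]_(n * n)) :
  \sum_k (1%:M : 'M[C]_n) (tidx k).1 (tidx k).2 * stateval H (kron 1%:M (Eb k)) =
  stateval H 1%:M.
Proof.
rewrite -(lin_sumC (f := fun X => stateval H (kron 1%:M X))).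
  by rewrite -basis_exp kron11.
by move=> a x y; rewrite kronDr statevalD.
Qed.

Lemma congB2 {C : numClosedFieldType} m r (B : 'M[C]_(r, m)) (a b : C) (X Y : 'M[C]_r) :
  adj B *m (a *: X + b *: Y) *m B = a *: (adj B *m X *m B) + b *: (adj B *m Y *m B).
Proof. by rewrite mulmxDr mulmxDl -!scalemxAr -!scalemxAl. Qed.

Lemma adj_cong {C : numClosedFieldType} m r (B : 'M[C]_(r, m)) (Y : 'M[C]_r) :
  adj B *m adj Y *m B = adj (adj B *m Y *m B).
Proof. by rewrite !adjM adjK mulmxA. Qed.

Lemma Pc_comb {C : numClosedFieldType} n (a b : C) (H H' : 'M[C]_(n * n)) :
  Pc H -> Pc H' -> Pc (a *: H + b *: H').
Proof.
move=> h h'; apply: Pc_lin => //; rewrite -[b *: H']addr0; apply: Pc_lin => //.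
by split=> A; rewrite /stateval mul0mx mxtrace0.
Qed.

Theorem mainTheorem2 (C : numClosedFieldType) (n : nat) (hn : (1 <= n)%N)
  (D : 'M[C]_(n * n)) :
  extremal_Gamma D ->
  (\rank D)%:R <= sqrtC ((2 * n ^ 2 - 1)%N%:R : C).
Proof.
move=> hE.
suff hr : (\rank D * \rank D <= 2 * n ^ 2 - 1)%N.
  rewrite -(@sqrCK _ (\rank D)%:R) ?ler0n //.
  rewrite ler_sqrtC ?nnegrE ?ler0n ?exprn_ge0 //.
  by rewrite -natrX ler_nat -mulnn.
rewrite leqNgt; apply/negP => hlt.
set B := row_base D.
have [Z hZ] : exists Z, B = Z *m D by apply/submxP; rewrite eq_row_base.
have [C0 hC0] := row_freeP (row_base_free D).
set r := \rank D in B Z C0 hZ hC0 hlt.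
set Mat := \matrix_(p < r * r, q < n * n + n * n)
  stateval (adj B *m vec_mx (delta_mx 0 p) *m B) (Kc q).
have hMat : forall u q, (u *m Mat) 0 q = stateval (adj B *m vec_mx u *m B) (Kc q).
  move=> u q; rewrite {2}(row_sum_delta u).
  rewrite (lin_sumC (f := fun X => stateval (adj B *m vec_mx X *m B) (Kc q))).
    by rewrite [LHS]mxE; apply: eq_bigr => j _; rewrite /Mat mxE.
  by move=> a x y; rewrite vec_mxD congB statevalDl.
have hw : Mat *m @wv C n = 0.
  apply/matrixP => p j; rewrite ord1 !mxE big_split_ord /=.
  set Hp := adj B *m vec_mx (delta_mx 0 p) *m B.
  rewrite (eq_bigr (fun k => (1%:M : 'M[C]_n) (tidx k).1 (tidx k).2 * stateval Hp (kron (Eb k) 1%:M))); last first.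
    by move=> k _; rewrite /Mat /wv mxE [wv _ _ _]mxE /Kc split_l mulrC.
  rewrite [X in _ + X](eq_bigr (fun k => - ((1%:M : 'M[C]_n) (tidx k).1 (tidx k).2 * stateval Hp (kron 1%:M (Eb k))))); last first.
    by move=> k _; rewrite /Mat /wv mxE [wv _ _ _]mxE /Kc split_r mulrC mulNr.
  by rewrite sumrN sum_basis_l sum_basis_r subrr.
have hrk : (\rank Mat <= n * n + n * n - 1)%N.
  have : (Mat <= kermx (@wv C n))%MS by apply/sub_kermxP.
  move/mxrankS; rewrite mxrank_ker => h; apply: (leq_trans h).
  by rewrite leq_sub2l // lt0n mxrank_eq0 wv_neq0.
have hk : kermx Mat != 0.
  rewrite -mxrank_eq0 mxrank_ker -lt0n subn_gt0.
  apply: (leq_ltn_trans hrk).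
  by move: hlt; rewrite -mulnn mul2n -addnn.
have [i hi] : exists i, row i (kermx Mat) != 0.
  case: (pickP (fun i => row i (kermx Mat) != 0)) => [i hi | h0]; first by exists i.
  move: hk; suff -> : kermx Mat = 0 by rewrite eqxx.
  by apply/row_matrixP => i; rewrite row0; apply/eqP; move: (h0 i) => /negbFE.
set u := row i (kermx Mat).
have hu : u *m Mat = 0 by apply/sub_kermxP; rewrite row_sub.
set Y := vec_mx u.
have hY : Y != 0.
  apply: contra hi => /eqP hY0.
  by rewrite -/u -(vec_mxK u) -/Y hY0 linear0.
have hP0 : Pc (adj B *m Y *m B).
  apply: Pc_basis => k.
    by move: (hMat u (lshift _ k)); rewrite hu mxE /Kc split_l => ->.
  by move: (hMat u (rshift _ k)); rewrite hu mxE /Kc split_r => ->.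
have hP1 : Pc (adj B *m adj Y *m B) by rewrite adj_cong; apply: Pc_adj.
case: (eqVneq (Y + adj Y) 0) => hY1.
  have hadj : adj Y = - Y by apply/eqP; rewrite -addr_eq0 addrC hY1.
  have i0 : ('i : C) != 0 by rewrite -normr_eq0 normCi oner_eq0.
  apply: (@finish C n r D B Z C0 (('i : C) *: Y + (- ('i : C)) *: adj Y) hE hZ hC0).
  - have iC : ('i : C)^* = - 'i by rewrite conjCi.
    rewrite adjD !adjZ adjK addrC; congr (_ + _); congr (_ *: _).
      by rewrite rmorphN /= iC opprK.
    exact: iC.
  - rewrite hadj scaleNr scalerN opprK -mulr2n -scaler_nat scalerA scaler_eq0 negb_or hY andbT.
    by rewrite mulf_eq0 negb_or i0 pnatr_eq0.
  - by rewrite congB2; apply: Pc_comb.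
apply: (@finish C n r D B Z C0 (1 *: Y + 1 *: adj Y) hE hZ hC0).
- by rewrite adjD !adjZ adjK rmorph1 addrC.
- by rewrite !scale1r.
- by rewrite congB2; apply: Pc_comb.
Qed.
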